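(* Let $B=A^{coH}\subseteq A$ be an $H$-Hopf–Galois extension with translation map $\tau$. Then the subspace of coinvariants $$(A\otimes A)^{coH}=\{X\in A\otimes A:\ \delta^{A\otimes A}(X)=X\otimes 1_H\},$$ where $\delta^{A\otimes A}(a\otimes\tilde a)=a_{(0)}\otimes\tilde a_{(0)}\otimes a_{(1)}\tilde a_{(1)}$, coincides with $$\mathcal{C}:=\{X=\textstyle\sum a\otimes\tilde a\in A\otimes A:\ \sum a_{(0)}\otimes a_{(1)}^{\langle 1\rangle}\otimes_B a_{(1)}^{\langle 2\rangle}\tilde a=\sum a\otimes\tilde a\otimes_B 1_A \text{ in } A\otimes(A\otimes_B A)\}.$$
   Context: All algebras are unital and associative over $\mathbb{C}$; Sweedler notation with implicit summation is used. $H$ is a Hopf algebra. $A$ is a right $H$-comodule algebra with coaction $\delta^A(a)=a_{(0)}\otimes a_{(1)}$, $B=A^{coH}=\{b\in A:\delta^A(b)=b\otimes 1_H\}$. The extension is $H$-Hopf–Galois if $\chi:A\otimes_B A\to A\otimes H$, $a'\otimes_B a\mapsto a'a_{(0)}\otimes a_{(1)}$, is bijective; the translation map is $\tau(h)=\chi^{-1}(1_A\otimes h)=:h^{\langle 1\rangle}\otimes_B h^{\langle 2\rangle}$. *)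

(* Defs.v *)
(* Tensor products over the ground field K (and the balanced
   tensor product over the subalgebra B = A^{coH}) are encoded by formal finite
   sums  sum_i x_i (x) y_i  (sequences of pairs/triples), two formal sums being
   equal in the tensor product iff every multilinear (resp. multilinear and
   B-balanced) map into every K-vector space takes the same value on them --
   i.e. equality in the quotient defining the tensor product, expressed through
   its universal property.  Sweedler notation  delta a = a_(0) (x) a_(1)  is a
   formal sum  delta a : seq (A * H). *)
From HB Require Import structures.
From mathcomp Require Import all_boot all_algebra.
From mathcomp Require Import reals.
From mathcomp.real_closed Require Import complex.

Set Implicit Arguments.
Unset Strict Implicit.
Unset Printing Implicit Defensive.

Import GRing.Theory.
Local Open Scope ring_scope.

Section Tensors.
Variable K : fieldType.

Definition lin (V U : lmodType K) (f : V -> U) : Prop :=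
  forall (a : K) (x y : V), f (a *: x + y) = a *: f x + f y.

Definition bilin (V W U : lmodType K) (f : V -> W -> U) : Prop :=
  (forall w, lin (fun v => f v w)) /\ (forall v, lin (f v)).

Definition trilin (V W Z U : lmodType K) (f : V -> W -> Z -> U) : Prop :=
  (forall w z, lin (fun v => f v w z)) /\ (forall v z, lin (fun w => f v w z))
  /\ (forall v w, lin (f v w)).

Definition teq2 (V W : lmodType K) (s t : seq (V * W)) : Prop :=
  forall (U : lmodType K) (f : V -> W -> U), bilin f ->
    \sum_(p <- s) f p.1 p.2 = \sum_(p <- t) f p.1 p.2.

Definition teq3 (V W Z : lmodType K) (s t : seq (V * W * Z)) : Prop :=
  forall (U : lmodType K) (f : V -> W -> Z -> U), trilin f ->
    \sum_(p <- s) f p.1.1 p.1.2 p.2 = \sum_(p <- t) f p.1.1 p.1.2 p.2.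

Definition tscale (V W : lmodType K) (a : K) (s : seq (V * W)) : seq (V * W) :=
  [seq (a *: p.1, p.2) | p <- s].

Definition tmul (V W : algType K) (s t : seq (V * W)) : seq (V * W) :=
  [seq (p.1 * q.1, p.2 * q.2) | p <- s, q <- t].

End Tensors.

Section Hopf.
Variable K : fieldType.

Definition is_hopf (H : algType K) (Delta : H -> seq (H * H)) (eps : H -> K)
    (S : H -> H) : Prop :=
  [/\
      (forall (a : K) (x y : H),
          teq2 (Delta (a *: x + y)) (tscale a (Delta x) ++ Delta y)),
      (forall x y : H, teq2 (Delta (x * y)) (tmul (Delta x) (Delta y))),
      teq2 (Delta 1) [:: (1, 1)] /\
      (forall h : H,
          teq3 [seq (q.1, q.2, p.2) | p <- Delta h, q <- Delta p.1]
               [seq (p.1, q.1, q.2) | p <- Delta h, q <- Delta p.2]),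
      [/\ (forall (a : K) (x y : H), eps (a *: x + y) = a * eps x + eps y),
          (forall x y : H, eps (x * y) = eps x * eps y),
          eps 1 = 1,
          (forall h : H, \sum_(p <- Delta h) eps p.1 *: p.2 = h) &
          (forall h : H, \sum_(p <- Delta h) eps p.2 *: p.1 = h)] &
      [/\ lin S,
          (forall h : H, \sum_(p <- Delta h) S p.1 * p.2 = eps h *: 1) &
          (forall h : H, \sum_(p <- Delta h) p.1 * S p.2 = eps h *: 1)]].

Definition is_comod_alg (H : algType K) (Delta : H -> seq (H * H)) (eps : H -> K)
    (A : algType K) (delta : A -> seq (A * H)) : Prop :=
  [/\ (forall (a : K) (x y : A),
          teq2 (delta (a *: x + y)) (tscale a (delta x) ++ delta y)),
      (forall x y : A, teq2 (delta (x * y)) (tmul (delta x) (delta y))),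
      teq2 (delta 1) [:: (1, 1)],
      (forall a : A,
          teq3 [seq (q.1, q.2, p.2) | p <- delta a, q <- delta p.1]
               [seq (p.1, q.1, q.2) | p <- delta a, q <- Delta p.2]) &
      (forall a : A, \sum_(p <- delta a) eps p.2 *: p.1 = a)].

Definition coinv (H A : algType K) (delta : A -> seq (A * H)) (b : A) : Prop :=
  teq2 (delta b) [:: (b, 1)].

Definition teqB (H A : algType K) (delta : A -> seq (A * H))
    (s t : seq (A * A)) : Prop :=
  forall (U : lmodType K) (f : A -> A -> U), bilin f ->
    (forall b x y, coinv delta b -> f (x * b) y = f x (b * y)) ->
    \sum_(p <- s) f p.1 p.2 = \sum_(p <- t) f p.1 p.2.

Definition teqAB (H A : algType K) (delta : A -> seq (A * H))
    (s t : seq (A * A * A)) : Prop :=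
  forall (U : lmodType K) (f : A -> A -> A -> U), trilin f ->
    (forall b a x y, coinv delta b -> f a (x * b) y = f a x (b * y)) ->
    \sum_(p <- s) f p.1.1 p.1.2 p.2 = \sum_(p <- t) f p.1.1 p.1.2 p.2.

Definition chi (H A : algType K) (delta : A -> seq (A * H))
    (s : seq (A * A)) : seq (A * H) :=
  [seq (p.1 * q.1, q.2) | p <- s, q <- delta p.2].

Definition hopf_galois (H A : algType K) (delta : A -> seq (A * H)) : Prop :=
  (forall s t : seq (A * A), teq2 (chi delta s) (chi delta t) -> teqB delta s t)
  /\ (forall y : seq (A * H), exists s : seq (A * A), teq2 (chi delta s) y).

Definition translation_map (H A : algType K) (delta : A -> seq (A * H))
    (tau : H -> seq (A * A)) : Prop :=
  forall h : H, teq2 (chi delta (tau h)) [:: (1, h)].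

Definition coact2 (H A : algType K) (delta : A -> seq (A * H))
    (X : seq (A * A)) : seq (A * A * H) :=
  flatten [seq [seq (q.1, r.1, q.2 * r.2) | q <- delta p.1, r <- delta p.2]
          | p <- X].

Definition tens1 (H A : algType K) (X : seq (A * A)) : seq (A * A * H) :=
  [seq (p.1, p.2, 1) | p <- X].

Definition inC (H A : algType K) (delta : A -> seq (A * H))
    (tau : H -> seq (A * A)) (X : seq (A * A)) : Prop :=
  teqAB delta
    (flatten [seq flatten [seq [seq (q.1, t.1, t.2 * p.2) | t <- tau q.2]
                          | q <- delta p.1]
             | p <- X])
    [seq (p.1, p.2, 1) | p <- X].

End Hopf.

(* Main.v *)
Require Import Defs.
From HB Require Import structures.
From mathcomp Require Import all_boot all_algebra.
From mathcomp Require Import reals.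
From mathcomp.real_closed Require Import complex.
Set Implicit Arguments.
Unset Strict Implicit.
Unset Printing Implicit Defensive.
Import GRing.Theory.
Local Open Scope ring_scope.

Section Gen.
Variable K : fieldType.

Lemma lin0 (V U : lmodType K) (f : V -> U) : lin f -> f 0 = 0.
Proof.
move=> Hf; have e := Hf 1 0 0; rewrite scaler0 addr0 scale1r in e.
by rewrite -[LHS](addrK (f 0)) -e subrr.
Qed.

Lemma linD (V U : lmodType K) (f : V -> U) : lin f -> forall x y, f (x + y) = f x + f y.
Proof. by move=> Hf x y; have := Hf 1 x y; rewrite !scale1r. Qed.

Lemma linZ (V U : lmodType K) (f : V -> U) : lin f -> forall a x, f (a *: x) = a *: f x.
Proof. by move=> Hf a x; have := Hf a x 0; rewrite (lin0 Hf) !addr0. Qed.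

Lemma lin_sumf (V U : lmodType K) (I : Type) (r : seq I) (F : I -> V -> U) :
  (forall i, lin (F i)) -> lin (fun v => \sum_(i <- r) F i v).
Proof.
move=> HF; rewrite /lin => a x y; rewrite (eq_bigr _ (fun i _ => HF i a x y)) big_split /=.
by rewrite scaler_sumr.
Qed.

Lemma lin_mulr (A : algType K) (U : lmodType K) (G : A -> U) (c : A) :
  lin G -> lin (fun v => G (v * c)).
Proof. by move=> HG; rewrite /lin => a x y /=; rewrite mulrDl -scalerAl HG. Qed.

Lemma lin_mull (A : algType K) (U : lmodType K) (G : A -> U) (c : A) :
  lin G -> lin (fun v => G (c * v)).
Proof. by move=> HG; rewrite /lin => a x y /=; rewrite mulrDr -scalerAr HG. Qed.

End Gen.
Section Main.
Variables (K : fieldType) (H A : algType K) (delta : A -> seq (A * H))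
  (tau : H -> seq (A * A)).
Hypothesis Hdlin : forall (a : K) (x y : A),
  teq2 (delta (a *: x + y)) (tscale a (delta x) ++ delta y).
Hypothesis Hdmul : forall x y : A, teq2 (delta (x * y)) (tmul (delta x) (delta y)).
Hypothesis Hd1 : teq2 (delta 1) [:: (1, 1)].
Hypothesis Htau : translation_map delta tau.

Lemma bilin_mk (V W U : lmodType K) (G : V -> W -> U) :
  (forall w, lin (fun v => G v w)) -> (forall v, lin (G v)) -> bilin G.
Proof. by split. Qed.

Lemma delta_mul_sum (U : lmodType K) (G : A -> H -> U) x y : bilin G ->
  \sum_(r <- delta (x * y)) G r.1 r.2 =
  \sum_(p <- delta x) \sum_(q <- delta y) G (p.1 * q.1) (p.2 * q.2).
Proof.
move=> HG; rewrite (Hdmul x y HG) /tmul big_flatten big_map /=.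
by apply: eq_bigr => p _; rewrite big_map.
Qed.

Lemma coinv_mul (U : lmodType K) (G : A -> H -> U) b y : bilin G ->
  coinv delta b ->
  \sum_(r <- delta (b * y)) G r.1 r.2 = \sum_(r <- delta y) G (b * r.1) r.2.
Proof.
move=> HG Hb; rewrite delta_mul_sum //.
have := Hb _ (fun u k => \sum_(q <- delta y) G (u * q.1) (k * q.2)).
rewrite big_seq1 /= => ->; last first.
  apply: bilin_mk => [w|v]; apply: lin_sumf => i.
    by apply: (lin_mulr (G := fun v => G v _)); apply HG.
  by apply: (lin_mulr (G := G _)); apply HG.
by apply: eq_bigr => r _; rewrite mul1r.
Qed.

Lemma chi_sum (U : lmodType K) (G : A -> H -> U) s :
  \sum_(p <- chi delta s) G p.1 p.2 =
  \sum_(p <- s) \sum_(q <- delta p.2) G (p.1 * q.1) q.2.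
Proof. by rewrite /chi big_flatten big_map; apply: eq_bigr => p _; rewrite big_map. Qed.

Lemma tau_sum (U : lmodType K) (G : A -> H -> U) h : bilin G ->
  \sum_(t <- tau h) \sum_(q <- delta t.2) G (t.1 * q.1) q.2 = G 1 h.
Proof. by move=> HG; have := Htau h HG; rewrite chi_sum big_seq1. Qed.

Lemma LHSKL (U : lmodType K) (G : A -> H -> U) h a : bilin G ->
  \sum_(t <- tau h) \sum_(q <- delta (t.2 * a)) G (t.1 * q.1) q.2 =
  \sum_(r <- delta a) G r.1 (h * r.2).
Proof.
move=> HG.
transitivity (\sum_(t <- tau h) \sum_(u <- delta t.2) \sum_(r <- delta a)
   G (t.1 * u.1 * r.1) (u.2 * r.2)).
  apply: eq_bigr => t _; rewrite (delta_mul_sum (G := fun v k => G (t.1 * v) k)).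
    by apply: eq_bigr => u _; apply: eq_bigr => r _; rewrite mulrA.
  apply: bilin_mk => [w|v]; last by apply HG.
  by apply: (lin_mull (G := fun v => G v _)); apply HG.
under eq_bigr do rewrite exchange_big.
rewrite exchange_big /=; apply: eq_bigr => r _.
rewrite (tau_sum (G := fun v k => G (v * r.1) (k * r.2))) ?mul1r //.
apply: bilin_mk => [w|v].
  by apply: (lin_mulr (G := fun v => G v _)); apply HG.
by apply: (lin_mulr (G := G _)); apply HG.
Qed.

End Main.
Section Main2.
Variables (K : fieldType) (H A : algType K) (delta : A -> seq (A * H))
  (tau : H -> seq (A * A)).
Hypothesis Hdlin : forall (a : K) (x y : A),
  teq2 (delta (a *: x + y)) (tscale a (delta x) ++ delta y).
Hypothesis Hdmul : forall x y : A, teq2 (delta (x * y)) (tmul (delta x) (delta y)).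
Hypothesis Hd1 : teq2 (delta 1) [:: (1, 1)].
Hypothesis Htau : translation_map delta tau.
Hypothesis Hinj : forall s t : seq (A * A),
  teq2 (chi delta s) (chi delta t) -> teqB delta s t.

Definition balanced (U : lmodType K) (F : A -> A -> U) :=
  forall b x y, coinv delta b -> F (x * b) y = F x (b * y).

Lemma inj_use s t :
  (forall (U : lmodType K) (G : A -> H -> U), bilin G ->
     \sum_(p <- s) \sum_(q <- delta p.2) G (p.1 * q.1) q.2 =
     \sum_(p <- t) \sum_(q <- delta p.2) G (p.1 * q.1) q.2) ->
  teqB delta s t.
Proof. by move=> E; apply: Hinj => U G HG; rewrite !chi_sum; apply: E. Qed.

Lemma tau1 (U : lmodType K) (F : A -> A -> U) : bilin F -> balanced F ->
  \sum_(t <- tau 1) F t.1 t.2 = F 1 1.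
Proof.
move=> HF Hb.
have := @inj_use (tau 1) [:: (1, 1)] _ U F HF Hb; rewrite big_seq1 /=; apply.
move=> U' G HG; rewrite (tau_sum Htau) // big_seq1 /=.
have := Hd1 (f := fun u k => G (1 * u) k); rewrite big_seq1 /= mulr1 => <- //.
apply: bilin_mk => [w|v]; last by apply HG.
by apply: (lin_mull (G := fun v => G v _)); apply HG.
Qed.

Lemma tau_lin (U : lmodType K) (F : A -> A -> U) : bilin F -> balanced F ->
  forall (a : K) h h',
  \sum_(t <- tau (a *: h + h')) F t.1 t.2 =
  a *: \sum_(t <- tau h) F t.1 t.2 + \sum_(t <- tau h') F t.1 t.2.
Proof.
move=> HF Hb a h h'.
have := @inj_use (tau (a *: h + h')) (tscale a (tau h) ++ tau h') _ U F HF Hb.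
rewrite big_cat big_map /= => ->; last first.
  move=> U' G HG; rewrite (tau_sum Htau) // big_cat big_map /=.
  rewrite (proj2 HG 1 a h h') -(tau_sum Htau h HG) -(tau_sum Htau h' HG).
  rewrite scaler_sumr; congr (_ + _); apply: eq_bigr => t _.
  rewrite scaler_sumr; apply: eq_bigr => q _.
  by rewrite -scalerAl (linZ (proj1 HG _)).
by rewrite scaler_sumr; congr (_ + _); apply: eq_bigr => t _; rewrite (linZ (proj1 HF _)).
Qed.

Lemma KL (U : lmodType K) (F : A -> A -> U) : bilin F -> balanced F ->
  forall h a,
  \sum_(t <- tau h) F t.1 (t.2 * a) =
  \sum_(r <- delta a) \sum_(t <- tau (h * r.2)) F (r.1 * t.1) t.2.
Proof.
move=> HF Hb h a.
set s := [seq (t.1, t.2 * a) | t <- tau h].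
set s' := flatten [seq [seq (r.1 * t.1, t.2) | t <- tau (h * r.2)] | r <- delta a].
have := @inj_use s s' _ U F HF Hb.
rewrite /s /s' big_map big_flatten big_map /= => ->; last first.
  move=> U' G HG; rewrite big_map /= (LHSKL Hdmul Htau) //.
  rewrite big_flatten big_map /=; apply: eq_bigr => r _; rewrite big_map /=.
  transitivity ((fun v k => G (r.1 * v) k) 1 (h * r.2)); first by rewrite /= mulr1.
  rewrite -(tau_sum Htau (G := fun v k => G (r.1 * v) k) (h * r.2)); last first.
    apply: bilin_mk => [w|v]; last by apply HG.
    by apply: (lin_mull (G := fun v => G v _)); apply HG.
  by apply: eq_bigr => t _; apply: eq_bigr => q _; rewrite mulrA.
by apply: eq_bigr => r _; rewrite big_map.
Qed.

End Main2.
Section Main3.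
Variables (K : fieldType) (H A : algType K) (delta : A -> seq (A * H))
  (tau : H -> seq (A * A)).
Hypothesis Hdlin : forall (a : K) (x y : A),
  teq2 (delta (a *: x + y)) (tscale a (delta x) ++ delta y).
Hypothesis Hdmul : forall x y : A, teq2 (delta (x * y)) (tmul (delta x) (delta y)).
Hypothesis Hd1 : teq2 (delta 1) [:: (1, 1)].
Hypothesis Htau : translation_map delta tau.
Hypothesis Hinj : forall s t : seq (A * A),
  teq2 (chi delta s) (chi delta t) -> teqB delta s t.

Lemma inC_sum (U : lmodType K) (f : A -> A -> A -> U) X :
  \sum_(p <- flatten [seq flatten [seq [seq (q.1, t.1, t.2 * p.2) | t <- tau q.2]
                          | q <- delta p.1] | p <- X]) f p.1.1 p.1.2 p.2 =
  \sum_(p <- X) \sum_(q <- delta p.1) \sum_(t <- tau q.2) f q.1 t.1 (t.2 * p.2).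
Proof.
rewrite big_flatten big_map; apply: eq_bigr => p _.
rewrite big_flatten big_map; apply: eq_bigr => q _; by rewrite big_map.
Qed.

Lemma coact2_sum (U : lmodType K) (g : A -> A -> H -> U) X :
  \sum_(p <- coact2 delta X) g p.1.1 p.1.2 p.2 =
  \sum_(p <- X) \sum_(q <- delta p.1) \sum_(r <- delta p.2) g q.1 r.1 (q.2 * r.2).
Proof.
rewrite /coact2 big_flatten big_map; apply: eq_bigr => p _.
rewrite big_flatten big_map; apply: eq_bigr => q _; by rewrite big_map.
Qed.

Lemma backward X : inC delta tau X -> teq3 (coact2 delta X) (tens1 H X).
Proof.
move=> HC U g [Hg1 [Hg2 Hg3]].
pose f := fun a x y => \sum_(r <- delta y) g a (x * r.1) r.2.
have Bl : forall v w, bilin (fun u k => g v (w * u) k).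
  move=> v w; apply: bilin_mk => [k|u]; last exact: Hg3.
  by apply: (lin_mull (G := fun x => g v x k)); exact: Hg2.
have Hf : trilin f.
  split; [|split].
  - by move=> w z; apply: lin_sumf => i; exact: Hg1.
  - move=> v z; apply: lin_sumf => i.
    by apply: (lin_mulr (G := fun x => g v x _)); exact: Hg2.
  - move=> v w; rewrite /lin => a x y; rewrite /f.
    rewrite (Hdlin a x y (Bl v w)) big_cat big_map /= scaler_sumr; congr (_ + _).
    by apply: eq_bigr => r _; rewrite -scalerAr (linZ (Hg2 v r.2)).
have Hbal : forall b a x y, coinv delta b -> f a (x * b) y = f a x (b * y).
  move=> b a x y Hb; rewrite /f (coinv_mul Hdmul (G := fun u k => g a (x * u) k)) //.
  by apply: eq_bigr => r _; rewrite mulrA.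
have := HC U f Hf Hbal; rewrite inC_sum coact2_sum => E.
transitivity (\sum_(p <- X) \sum_(q <- delta p.1) \sum_(t <- tau q.2) f q.1 t.1 (t.2 * p.2)).
  apply: eq_bigr => p _; apply: eq_bigr => q _; rewrite /f.
  by rewrite (LHSKL Hdmul Htau (G := fun u k => g q.1 u k)) //; apply: bilin_mk.
rewrite E /tens1 !big_map; apply: eq_bigr => p _ /=; rewrite /f.
by rewrite (Hd1 (Bl p.1 p.2)) big_seq1 /= mulr1.
Qed.

Lemma forward X : teq3 (coact2 delta X) (tens1 H X) -> inC delta tau X.
Proof.
move=> HT U f [Hf1 [Hf2 Hf3]] Hbal.
pose g := fun a x h => \sum_(t <- tau h) f a (x * t.1) t.2.
have Bl : forall v w, bilin (fun u k => f v (w * u) k).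
  move=> v w; apply: bilin_mk => [k|u]; last exact: Hf3.
  by apply: (lin_mull (G := fun x => f v x k)); exact: Hf2.
have Bb : forall v w, balanced delta (fun u k => f v (w * u) k).
  by move=> v w b x y Hb /=; rewrite mulrA Hbal.
have Hg : trilin g.
  split; [|split].
  - by move=> w z; apply: lin_sumf => i; exact: Hf1.
  - move=> v z; apply: lin_sumf => i.
    by apply: (lin_mulr (G := fun x => f v x _)); exact: Hf2.
  - move=> v w; rewrite /lin => a x y; rewrite /g.
    by move: (tau_lin Htau Hinj (Bl v w) (Bb v w) a x y) => /= ->.
have := HT U g Hg; rewrite coact2_sum => E.
rewrite inC_sum.
transitivity (\sum_(p <- X) \sum_(q <- delta p.1) \sum_(r <- delta p.2) g q.1 r.1 (q.2 * r.2)).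
  apply: eq_bigr => p _; apply: eq_bigr => q _; rewrite /g.
  have B1 : bilin (fun u k => f q.1 u k) by apply: bilin_mk.
  have B2 : balanced delta (fun u k => f q.1 u k) by move=> b x y Hb; apply: Hbal.
  by rewrite (KL Hdmul Htau Hinj B1 B2).
rewrite E /tens1 !big_map; apply: eq_bigr => p _ /=; rewrite /g.
by rewrite (tau1 Hd1 Htau Hinj (Bl p.1 p.2) (Bb p.1 p.2)) mulr1.
Qed.

End Main3.

Unset Implicit Arguments.

Theorem lemma3p1 (R : realType)
    (H : algType R[i]) (Delta : H -> seq (H * H)) (eps : H -> R[i]) (S : H -> H)
    (A : algType R[i]) (delta : A -> seq (A * H)) (tau : H -> seq (A * A)) :
  is_hopf Delta eps S ->
  is_comod_alg Delta eps delta ->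
  hopf_galois delta ->
  translation_map delta tau ->
  forall X : seq (A * A),
    teq3 (coact2 delta X) (tens1 H X) <-> inC delta tau X.
Proof.
move=> _ [Hdlin Hdmul Hd1 _ _] [Hinj _] Htau X; split.
  exact: (forward Hdmul Hd1 Htau Hinj).
exact: (backward Hdlin Hdmul Hd1 Htau).
Qed.
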